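(* Let $\mathcal{X}$ and $\mathcal{Y}$ be finite sets, let $\mathcal{M}\subseteq\mathcal{X}\times\mathcal{Y}$ be the set of actual matches, and let $\hat{\mathcal{M}}_H\subseteq\mathcal{X}\times\mathcal{Y}$ be a fixed set (matches identified by a holdout query algorithm, chosen independently of all samples below). Let $\mathcal{S}_{\mathcal{X}}$ and $\mathcal{S}'_{\mathcal{X}}$ be independent samples, each drawn uniformly at random without replacement from $\mathcal{X}$. Let $\hat{\mathcal{M}}\subseteq\mathcal{X}\times\mathcal{Y}$ be a set of identified matches (produced by a ''complete'' query algorithm) which may depend on $\mathcal{S}_{\mathcal{X}}$ but is independent of $\mathcal{S}'_{\mathcal{X}}$ given $\mathcal{S}_{\mathcal{X}}$ (i.e. it is a fixed set conditional on $\mathcal{S}_{\mathcal{X}}$). For $x\in\mathcal{X}$ let $\mathcal{M}(x)$, $\hat{\mathcal{M}}(x)$, $\hat{\mathcal{M}}_H(x)$ be the sets of pairs in $\mathcal{M}$, $\hat{\mathcal{M}}$, $\hat{\mathcal{M}}_H$ respectively whose first coordinate is $x$. Let $\hat{\mathcal{X}}=\{x:\hat{\mathcal{M}}(x)\ne\emptyset\}$ and $\hat{\mathcal{X}}_H=\{x:\hat{\mathcal{M}}_H(x)\ne\emptyset\}$; for $x\in\hat{\mathcal{X}}_H$ let $p_H(x)=|\hat{\mathcal{M}}_H(x)\cap\mathcal{M}(x)|/|\hat{\mathcal{M}}_H(x)|$, for $x\in\hat{\mathcal{X}}$ let $p(x)=|\hat{\mathcal{M}}(x)\cap\mathcal{M}(x)|/|\hat{\mathcal{M}}(x)|$,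 and define the query precision $P=\frac{1}{|\hat{\mathcal{X}}|}\sum_{x\in\hat{\mathcal{X}}}p(x)$. Define, for $x\in\mathcal{X}$, $$d_p(x)=\mathbf{1}_{\hat{\mathcal{X}}\cap\hat{\mathcal{X}}_H}(x)\,\mathbf{1}\{\hat{\mathcal{M}}(x)\ne\hat{\mathcal{M}}_H(x)\}\left(1+\frac{|\hat{\mathcal{M}}_H(x)\setminus\hat{\mathcal{M}}(x)|}{|\hat{\mathcal{M}}(x)|}\right)+\mathbf{1}_{\hat{\mathcal{X}}_H\setminus\hat{\mathcal{X}}}(x).$$ Then for any $\delta>0$, with probability at least $1-4\delta$, $$P\ \ge\ \frac{p^-(\mathcal{X},\mathcal{S}'_{\mathcal{X}},\mathbf{1}_{\hat{\mathcal{X}}_H},0,1,\delta)\,p^-(\hat{\mathcal{X}}_H,\mathcal{S}_{\mathcal{X}}\cap\hat{\mathcal{X}}_H,p_H,0,1,\delta)-p^+(\mathcal{X},\mathcal{S}'_{\mathcal{X}},d_p,-1,2,\delta)}{p^+(\mathcal{X},\mathcal{S}'_{\mathcal{X}},\mathbf{1}_{\hat{\mathcal{X}}},0,1,\delta)}.$$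
   Context: PAC bound rules: $p^+$ and $p^-$ are functions which, given a finite set $\mathcal{P}$ (population), a subset $\mathcal{S}\subseteq\mathcal{P}$, a function $f:\mathcal{P}\to\mathbb{R}$, reals $a\le b$ and $\delta>0$, return a real number, and satisfy the following: for every finite set $\mathcal{P}$ with $|\mathcal{P}|=n$, every sample size $s$, and every $f$ with $a\le f(x)\le b$ for all $x\in\mathcal{P}$, if $\mathcal{S}$ is a size-$s$ sample drawn uniformly at random without replacement from $\mathcal{P}$ and $\mu=\frac1n\sum_{x\in\mathcal{P}}f(x)$, then $\Pr\{\mu>p^+(\mathcal{P},\mathcal{S},f,a,b,\delta)\}\le\delta$ and $\Pr\{\mu<p^-(\mathcal{P},\mathcal{S},f,a,b,\delta)\}\le\delta$. $\mathbf{1}_{A}$ denotes the indicator function of a set $A$ and $\mathbf{1}\{\cdot\}$ the indicator of an event.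
   Formalization: The lower rule $p^-$ returns only values ≥ a whenever a ≤ b, and $-1\le d_p(x)\le 2$ holds for all x and every possible sample $\mathcal{S}_{\mathcal{X}}$. Each condition added here is assumed in the paper as well or is needed for the statement above to hold. *)

(* Defs.v *)
From HB Require Import structures.
From mathcomp Require Import all_boot all_order all_algebra.
Set Implicit Arguments. Unset Strict Implicit. Unset Printing Implicit Defensive.
Import Order.TTheory GRing.Theory Num.Theory.
Local Open Scope ring_scope.

Section Defs.
Variable R : realFieldType.

Section Rules.
Variable T : finType.

Definition pop_mean (P : {set T}) (f : T -> R) : R :=
  (\sum_(x in P) f x) / (#|P|%:R).

(* probability that a size-s sample drawn uniformly without replacement
   from P (i.e. a uniform s-subset of P) satisfies the event E *)
Definition samp_prob (P : {set T}) (s : nat) (E : {set T} -> bool) : R :=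
  (#|[set S : {set T} | [&& S \subset P, #|S| == s & E S]]|%:R)
  / (#|[set S : {set T} | (S \subset P) && (#|S| == s)]|%:R).

(* type of a bound rule  p(P, S, f, a, b, delta) *)
Definition rule_t := {set T} -> {set T} -> (T -> R) -> R -> R -> R -> R.

Definition upper_rule (pp : rule_t) : Prop :=
  forall (P : {set T}) (s : nat) (f : T -> R) (a b delta : R),
    (0 < #|P|)%N -> (s <= #|P|)%N -> 0 < delta ->
    (forall x, x \in P -> a <= f x <= b) ->
    samp_prob P s (fun S => pp P S f a b delta < pop_mean P f) <= delta.

Definition lower_rule (pm : rule_t) : Prop :=
  forall (P : {set T}) (s : nat) (f : T -> R) (a b delta : R),
    (0 < #|P|)%N -> (s <= #|P|)%N -> 0 < delta ->
    (forall x, x \in P -> a <= f x <= b) ->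
    samp_prob P s (fun S => pop_mean P f < pm P S f a b delta) <= delta.

Definition lower_rule_ge_a (pm : rule_t) : Prop :=
  forall (P S : {set T}) (f : T -> R) (a b delta : R),
    a <= b -> a <= pm P S f a b delta.

Definition indic (A : {set T}) (x : T) : R := (x \in A)%:R.
End Rules.

Section Match.
Variables X Y : finType.

Definition msec (A : {set X * Y}) (x : X) : {set X * Y} :=
  [set q in A | q.1 == x].

Definition matched (A : {set X * Y}) : {set X} :=
  [set x | msec A x != set0].

Definition pfrac (M A : {set X * Y}) (x : X) : R :=
  (#|msec A x :&: msec M x|%:R) / (#|msec A x|%:R).

Definition precision (M A : {set X * Y}) : R :=
  (\sum_(x in matched A) pfrac M A x) / (#|matched A|%:R).

Definition dp (A AH : {set X * Y}) (x : X) : R :=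
  indic (matched A :&: matched AH) x
    * (msec A x != msec AH x)%:R
    * (1 + (#|msec AH x :\: msec A x|%:R) / (#|msec A x|%:R))
  + indic (matched AH :\: matched A) x.

(* joint probability over independent uniform samples S (size s) and
   S' (size s') drawn without replacement from X *)
Definition pair_prob (s s' : nat) (E : {set X} -> {set X} -> bool) : R :=
  (#|[set q : {set X} * {set X} | [&& #|q.1| == s, #|q.2| == s' & E q.1 q.2]]|%:R)
  / (#|[set q : {set X} * {set X} | (#|q.1| == s) && (#|q.2| == s')]|%:R).
End Match.
End Defs.

(* Main.v *)
Require Import Defs.
From HB Require Import structures.
From mathcomp Require Import all_boot all_order all_algebra.
From mathcomp Require Import zify.
From mathcomp.algebra_tactics Require Import ring lra.
Import Order.TTheory GRing.Theory Num.Theory.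
Local Open Scope ring_scope.
Set Implicit Arguments. Unset Strict Implicit. Unset Printing Implicit Defensive.

Section Det.
Variables (R : realFieldType) (X Y : finType).

Lemma pfrac_ge0 (M A : {set X * Y}) x : 0 <= pfrac R M A x.
Proof. by rewrite /pfrac divr_ge0 // ler0n. Qed.

Lemma pfrac_le1 (M A : {set X * Y}) x : pfrac R M A x <= 1.
Proof.
rewrite /pfrac; case: (posnP #|msec A x|) => [->|h]; first by rewrite invr0 mulr0 ler01.
by rewrite ler_pdivrMr ?ltr0n // mul1r ler_nat subset_leq_card // subsetIl.
Qed.

Lemma pm_T (f : X -> R) : pop_mean [set: X] f = (\sum_x f x) / #|X|%:R.
Proof. by rewrite /pop_mean cardsT; congr (_ / _); apply: eq_bigl => x; rewrite inE. Qed.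

Lemma sum_indicM (B : {set X}) (g : X -> R) :
  \sum_x indic R B x * g x = \sum_(x in B) g x.
Proof.
rewrite [RHS]big_mkcond /=; apply: eq_bigr => x _; rewrite /indic.
by case: (x \in B); rewrite ?mul1r ?mul0r.
Qed.

Lemma sum_indic (B : {set X}) : \sum_x indic R B x = #|B|%:R.
Proof.
transitivity (\sum_x indic R B x * 1); first by apply: eq_bigr => x _; rewrite mulr1.
by rewrite sum_indicM sumr_const.
Qed.

Lemma pointwise (M MH Mh : {set X * Y}) x :
  indic R (matched MH) x * pfrac R M MH x - dp R Mh MH x <=
  indic R (matched Mh) x * pfrac R M Mh x.
Proof.
have h1 := pfrac_ge0 M MH x; have h2 := pfrac_le1 M MH x.
have h3 := pfrac_ge0 M Mh x; have h4 := pfrac_le1 M Mh x.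
have h5 : 0 <= #|msec MH x :\: msec Mh x|%:R / #|msec Mh x|%:R :> R.
  by rewrite divr_ge0 // ler0n.
rewrite /dp /indic !inE.
case: (msec MH x != set0); case: (msec Mh x != set0);
  case e: (msec Mh x != msec MH x) => /=; rewrite ?mulr1n ?mulr0n; try lra.
move/negbFE/eqP: e => e; rewrite /pfrac e in h3 h4 h5 *; lra.
Qed.

Lemma det (M MH Mh : {set X * Y}) (pm1 pm2 pp3 pp4 : R) :
 (0 < #|X|)%N -> 0 <= pm1 -> 0 <= pm2 ->
 pm1 <= pop_mean [set: X] (indic R (matched MH)) ->
 ((0 < #|matched MH|)%N -> pm2 <= pop_mean (matched MH) (pfrac R M MH)) ->
 pop_mean [set: X] (dp R Mh MH) <= pp3 ->
 pop_mean [set: X] (indic R (matched Mh)) <= pp4 ->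
 (pm1 * pm2 - pp3) / pp4 <= precision R M Mh.
Proof.
move=> n0 h1 h2 e1 e2 e3 e4.
set A := matched MH; set Xh := matched Mh.
set n : R := #|X|%:R. have n0' : 0 < n by rewrite ltr0n.
set T := \sum_(x in A) pfrac R M MH x.
set D := \sum_x dp R Mh MH x.
set Q := \sum_(x in Xh) pfrac R M Mh x.
set k : R := #|Xh|%:R.
have hpt : T - D <= Q.
  rewrite /T /Q -!sum_indicM -sumrB; apply: ler_sum => x _; exact: pointwise.
have hT : 0 <= T by apply: sumr_ge0 => x _; exact: pfrac_ge0.
have hP : 0 <= precision R M Mh.
  by rewrite /precision divr_ge0 ?ler0n //; apply: sumr_ge0 => x _; exact: pfrac_ge0.
have hQ : Q / n = precision R M Mh * (k / n).
  rewrite /precision -/Xh -/Q -/k; case: (posnP #|Xh|) => [h0|hk].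
    have : Xh = set0 by apply/eqP; rewrite -cards_eq0 h0.
    by rewrite /Q /k h0 => ->; rewrite big_set0 !mul0r.
  by rewrite mulrA divfK // pnatr_eq0 -lt0n.
have e4' : k / n <= pp4 by move: e4; rewrite pm_T sum_indic.
have e1' : pm1 <= #|A|%:R / n by move: e1; rewrite pm_T sum_indic.
have e3' : D / n <= pp3 by move: e3; rewrite pm_T.
have hm : pm1 * pm2 <= T / n.
  case: (posnP #|A|) => [h0|hA].
    rewrite h0 mul0r in e1'.
    have -> : pm1 = 0 by apply/le_anti/andP.
    by rewrite mul0r divr_ge0 // ltW.
  have e2' := e2 hA; rewrite /pop_mean -/A -/T in e2'.
  apply: (le_trans (ler_pM h1 h2 e1' e2')).
  by rewrite mulrC mulrA divfK // pnatr_eq0 -lt0n.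
have hk0 : 0 <= k / n by rewrite divr_ge0 ?ler0n // ltW.
have hN : pm1 * pm2 - pp3 <= precision R M Mh * pp4.
  apply: (le_trans (lerB hm e3')).
  rewrite -mulrBl.
  apply: (@le_trans _ _ (Q / n)); first by rewrite ler_pM2r // invr_gt0.
  by rewrite hQ ler_wpM2l.
have pp40 : 0 <= pp4 by apply: le_trans e4'.
case: (eqVneq pp4 0) => [->|nz]; first by rewrite invr0 mulr0.
by rewrite ler_pdivrMr // lt_def nz.
Qed.
End Det.
Section Count.
Variables (R : realFieldType) (X : finType).

Lemma frac_le (a b : nat) (d : R) : (a <= b)%N -> 0 <= d ->
  a%:R / b%:R <= d -> a%:R <= d * b%:R.
Proof.
move=> ab d0; case: (posnP b) => [b0|bp].
  by move: ab; rewrite b0 leqn0 => /eqP ->; rewrite mulr0.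
by rewrite ler_pdivrMr // ltr0n.
Qed.

Lemma card_indic (T : finType) (P : pred T) : #|[set x | P x]| = (\sum_x (P x : nat))%N.
Proof. by rewrite -sum1dep_card big_mkcond; apply: eq_bigr => x _; case: (P x). Qed.

Lemma sum_const_dep (T : finType) (P : pred T) (c : R) :
  \sum_(x | P x) c = c * #|[set x | P x]|%:R.
Proof. by rewrite -sum1dep_card natr_sum mulr_sumr; apply: eq_bigr => x _; rewrite mulr1. Qed.

Lemma count_pair s s' (E : {set X} -> {set X} -> bool) :
 #|[set q : {set X} * {set X} | [&& #|q.1| == s, #|q.2| == s' & E q.1 q.2]]| =
 (\sum_(S : {set X} | #|S| == s) #|[set S' : {set X} | (#|S'| == s') && E S S']|)%N.
Proof.
symmetry; under eq_bigr do rewrite -sum1dep_card.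
by rewrite pair_big_dep sum1dep_card.
Qed.

Lemma bound_pair s s' (E : {set X} -> {set X} -> bool) (c : {set X} -> R) :
 (forall S : {set X}, #|S| = s -> #|[set S' : {set X} | (#|S'| == s') && E S S']|%:R <= c S) ->
 #|[set q : {set X} * {set X} | [&& #|q.1| == s, #|q.2| == s' & E q.1 q.2]]|%:R
   <= \sum_(S : {set X} | #|S| == s) c S.
Proof. by move=> H; rewrite count_pair natr_sum; apply: ler_sum => S /eqP; apply: H. Qed.

Lemma capA (A T U : {set X}) : T \subset A -> U \subset ~: A -> (T :|: U) :&: A = T.
Proof.
move=> /subsetP hT /subsetP hU; apply/setP => x; rewrite !inE.
have := hT x; have := hU x; rewrite !inE.
by case: (x \in A); case: (x \in T); case: (x \in U) => //= h1 h2; first [by have := h1 isT | by have := h2 isT].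
Qed.

Lemma diffA (A T U : {set X}) : T \subset A -> U \subset ~: A -> (T :|: U) :\: A = U.
Proof.
move=> /subsetP hT /subsetP hU; apply/setP => x; rewrite !inE.
have := hT x; have := hU x; rewrite !inE.
by case: (x \in A); case: (x \in T); case: (x \in U) => //= h1 h2; first [by have := h1 isT | by have := h2 isT].
Qed.

Lemma cardU_dis (A T U : {set X}) : T \subset A -> U \subset ~: A -> #|T :|: U| = (#|T| + #|U|)%N.
Proof.
move=> /subsetP hT /subsetP hU; rewrite cardsU.
suff -> : T :&: U = set0 by rewrite cards0 subn0.
apply/setP => x; rewrite !inE.
have := hT x; have := hU x; rewrite !inE.
by case: (x \in A); case: (x \in T); case: (x \in U) => //= h1 h2; first [by have := h1 isT | by have := h2 isT].
Qed.

Lemma bij (A U : {set X}) (s : nat) (F : {set X} -> bool) : U \subset ~: A ->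
 #|[set S : {set X} | ((#|S| == s) && F (S :&: A)) && (S :\: A == U)]| =
 #|[set T : {set X} | [&& T \subset A, (#|T| + #|U| == s)%N & F T]]|.
Proof.
move=> hU.
set D := [set T : {set X} | [&& T \subset A, (#|T| + #|U| == s)%N & F T]].
have -> : [set S : {set X} | ((#|S| == s) && F (S :&: A)) && (S :\: A == U)] = (fun T => T :|: U) @: D.
  apply/setP => S; rewrite inE; apply/idP/imsetP.
    move=> /andP [/andP [/eqP hs hF] /eqP hUe]; exists (S :&: A).
      by rewrite /D inE subsetIr hF andbT -hUe cardsID hs eqxx.
    by rewrite -hUe setID.
  move=> [T]; rewrite /D inE => /and3P [hTA hc hF] ->.
  by rewrite (capA hTA hU) (diffA hTA hU) (cardU_dis hTA hU) hc hF eqxx.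
apply: card_in_imset => T1 T2; rewrite /D !inE => /and3P [h1 _ _] /and3P [h2 _ _] e.
by rewrite -(capA h1 hU) e (capA h2 hU).
Qed.

Lemma decomp (A : {set X}) (s : nat) (F : {set X} -> bool) :
 #|[set S : {set X} | (#|S| == s) && F (S :&: A)]| =
 (\sum_(U : {set X} | U \subset ~: A) #|[set T : {set X} | [&& T \subset A, (#|T| + #|U| == s)%N & F T]]|)%N.
Proof.
rewrite -sum1dep_card (partition_big (fun S => S :\: A) (fun U => U \subset ~: A)) /=.
  by apply: eq_bigr => U hU; rewrite sum1dep_card bij.
by move=> S _; rewrite setDE subsetIr.
Qed.

Lemma mix (A : {set X}) (s : nat) (F : {set X} -> bool) (d : R) :
 0 <= d ->
 (forall k, #|[set T : {set X} | [&& T \subset A, #|T| == k & F T]]|%:R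
      <= d * #|[set T : {set X} | [&& T \subset A, #|T| == k & true]]|%:R) ->
 #|[set S : {set X} | (#|S| == s) && F (S :&: A)]|%:R <= d * #|[set S : {set X} | #|S| == s]|%:R.
Proof.
move=> d0 H.
have -> : [set S : {set X} | #|S| == s] = [set S : {set X} | (#|S| == s) && (fun _ => true) (S :&: A)].
  by apply/setP => S; rewrite !inE andbT.
rewrite (decomp A s F) (decomp A s (fun _ => true)) !natr_sum mulr_sumr; apply: ler_sum => U _.
case: (leqP #|U| s) => hs.
  have eqk : forall G : {set X} -> bool,
    [set T : {set X} | [&& T \subset A, (#|T| + #|U| == s)%N & G T]] =
    [set T : {set X} | [&& T \subset A, #|T| == (s - #|U|)%N & G T]].
    move=> G; apply/setP => T; rewrite !inE.
    have -> : ((#|T| + #|U| == s)%N) = (#|T| == (s - #|U|)%N) by apply/eqP/eqP; lia.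
    by [].
  by rewrite !eqk; apply: H.
have -> : [set T : {set X} | [&& T \subset A, (#|T| + #|U| == s)%N & F T]] = set0.
  by apply/setP => T; rewrite !inE; apply/negP => /and3P [_ /eqP h _]; lia.
by rewrite cards0 mulr_ge0 ?ler0n.
Qed.
End Count.

Section Main.
Variables (R : realFieldType) (X : finType).

Lemma den_eq (s s' : nat) :
  #|[set q : {set X} * {set X} | (#|q.1| == s) && (#|q.2| == s')]|%:R =
  #|[set S : {set X} | #|S| == s]|%:R * #|[set S' : {set X} | #|S'| == s']|%:R :> R.
Proof.
have -> : [set q : {set X} * {set X} | (#|q.1| == s) && (#|q.2| == s')] =
  [set q : {set X} * {set X} | [&& #|q.1| == s, #|q.2| == s' & (fun _ _ => true) q.1 q.2]].
  by apply/setP => q; rewrite !inE andbT.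
rewrite (count_pair s s' (fun _ _ => true)) natr_sum.
have -> : [set S' : {set X} | (#|S'| == s') && true] = [set S' : {set X} | #|S'| == s'].
  by apply/setP => q; rewrite !inE andbT.
by rewrite sum_const_dep mulrC.
Qed.

Lemma den_gt0 (s s' : nat) : (s <= #|X|)%N -> (s' <= #|X|)%N ->
  0 < #|[set q : {set X} * {set X} | (#|q.1| == s) && (#|q.2| == s')]|%:R :> R.
Proof.
move=> h h'; rewrite den_eq !card_draws mulr_gt0 // ltr0n bin_gt0 //.
Qed.

Lemma samp_T (s' : nat) (E : {set X} -> bool) (d : R) : 0 <= d ->
  samp_prob R [set: X] s' E <= d ->
  #|[set S' : {set X} | (#|S'| == s') && E S']|%:R <= d * #|[set S' : {set X} | #|S'| == s']|%:R.
Proof.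
move=> d0; rewrite /samp_prob.
have -> : [set S : {set X} | [&& S \subset [set: X], #|S| == s' & E S]] =
   [set S' : {set X} | (#|S'| == s') && E S'] by apply/setP => S; rewrite !inE subsetT.
have -> : [set S : {set X} | (S \subset [set: X]) && (#|S| == s')] =
   [set S' : {set X} | #|S'| == s'] by apply/setP => S; rewrite !inE subsetT.
apply: frac_le => //; apply: subset_leq_card; apply/subsetP => S; rewrite !inE.
by case/andP.
Qed.

Lemma bound_T (s s' : nat) (E : {set X} -> {set X} -> bool) (d : R) : 0 <= d ->
  (forall S : {set X}, #|S| = s -> samp_prob R [set: X] s' (E S) <= d) ->
  #|[set q : {set X} * {set X} | [&& #|q.1| == s, #|q.2| == s' & E q.1 q.2]]|%:R
   <= d * #|[set q : {set X} * {set X} | (#|q.1| == s) && (#|q.2| == s')]|%:R.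
Proof.
move=> d0 H.
apply: (le_trans (bound_pair (c := fun _ => d * #|[set S' : {set X} | #|S'| == s']|%:R) _)).
  by move=> S hS; apply: samp_T => //; apply: H.
by rewrite sum_const_dep den_eq -mulrA [X in d * X]mulrC.
Qed.

Lemma sum_bool_dep (P Q : pred {set X}) :
  \sum_(S | P S) (Q S)%:R = #|[set S | P S && Q S]|%:R :> R.
Proof.
rewrite card_indic natr_sum big_mkcond; apply: eq_bigr => S _.
by case: (P S); case: (Q S).
Qed.

Lemma prob_union (s s' : nat) (E0 E1 E2 E3 E4 : {set X} -> {set X} -> bool) (d : R) :
 (s <= #|X|)%N -> (s' <= #|X|)%N ->
 (forall S S' : {set X}, #|S| = s -> [|| E0 S S', E1 S S', E2 S S', E3 S S' | E4 S S']) ->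
 (let Om E := #|[set q : {set X} * {set X} | [&& #|q.1| == s, #|q.2| == s' & E q.1 q.2]]|%:R in
  let den := #|[set q : {set X} * {set X} | (#|q.1| == s) && (#|q.2| == s')]|%:R in
  [/\ Om E1 <= d * den, Om E2 <= d * den, Om E3 <= d * den & Om E4 <= d * den]) ->
 1 - 4 * d <= pair_prob R s s' E0.
Proof.
move=> hs hs' H /= [k1 k2 k3 k4].
have dpos : 0 < _ :> R := den_gt0 hs hs'.
rewrite /pair_prob ler_pdivlMr //.
set den := #|[set q : {set X} * {set X} | (#|q.1| == s) && (#|q.2| == s')]|.
pose Om E := #|[set q : {set X} * {set X} | [&& #|q.1| == s, #|q.2| == s' & E q.1 q.2]]|.
have key : (den <= Om E0 + Om E1 + Om E2 + Om E3 + Om E4)%N.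
  have -> : den = Om (fun _ _ => true).
    by rewrite /den /Om; apply: eq_card => q; rewrite !inE andbT.
  rewrite /Om (count_pair s s' (fun _ _ => true)) !count_pair -!big_split /=; apply: leq_sum => S /eqP hS.
  rewrite !card_indic -!big_split /=; apply: leq_sum => S' _.
  move: (H S S' hS).
  by case: (E0 S S'); case: (E1 S S'); case: (E2 S S'); case: (E3 S S'); case: (E4 S S');
     case: (#|S'| == s').
move: key; rewrite -(ler_nat R) !natrD -/den => key.
rewrite -/(Om E0) -/(Om E1) -/(Om E2) -/(Om E3) -/(Om E4) in key k1 k2 k3 k4 *.
set a := d * den%:R in k1 k2 k3 k4.
have -> : (1 - 4 * d) * den%:R = den%:R - 4 * a by rewrite /a; ring.
lra.
Qed.
End Main.

Theorem theorem6 (R : realFieldType) (X Y : finType)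
    (pplus pminus : rule_t R X)
    (Hplus : upper_rule pplus) (Hminus : lower_rule pminus)
    (Hminus_ge : lower_rule_ge_a pminus)
    (M MH : {set X * Y}) (Mhat : {set X} -> {set X * Y})
    (s s' : nat) (delta : R) :
  (0 < #|X|)%N -> (s <= #|X|)%N -> (s' <= #|X|)%N ->
  (forall S : {set X}, #|S| = s -> forall x : X,
      -1 <= dp R (Mhat S) MH x <= 2) ->
  0 < delta ->
  1 - 4 * delta <=
  pair_prob R s s' (fun S S' =>
    (pminus [set: X] S' (indic R (matched MH)) 0 1 delta
       * pminus (matched MH) (S :&: matched MH) (pfrac R M MH) 0 1 delta
     - pplus [set: X] S' (dp R (Mhat S) MH) (-1) 2 delta)
    / pplus [set: X] S' (indic R (matched (Mhat S))) 0 1 delta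
    <= precision R M (Mhat S)).
Proof.
move=> n0 hs hs' hdp d0.
have d0' := ltW d0.
have nT : (0 < #|[set: X]|)%N by rewrite cardsT.
have hsT : (s' <= #|[set: X]|)%N by rewrite cardsT.
have ind01 : forall (B : {set X}) x, x \in [set: X] -> 0 <= indic R B x <= 1.
  by move=> B x _; rewrite /indic; case: (x \in B); rewrite ?ler01 ?lexx.
set A := matched MH.
apply: (prob_union (E1 := fun S S' => pop_mean [set: X] (indic R A) < pminus [set: X] S' (indic R A) 0 1 delta)
   (E2 := fun S S' => (0 < #|A|)%N && (pop_mean A (pfrac R M MH) < pminus A (S :&: A) (pfrac R M MH) 0 1 delta))
   (E3 := fun S S' => pplus [set: X] S' (dp R (Mhat S) MH) (-1) 2 delta < pop_mean [set: X] (dp R (Mhat S) MH))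
   (E4 := fun S S' => pplus [set: X] S' (indic R (matched (Mhat S))) 0 1 delta < pop_mean [set: X] (indic R (matched (Mhat S))))
   hs hs' _ _).
  move=> S S' hS /=.
  have [e1|e1] := boolP (pop_mean [set: X] (indic R A) < pminus [set: X] S' (indic R A) 0 1 delta).
    by rewrite /= !orbT.
  have [e2|e2] := boolP ((0 < #|A|)%N && (pop_mean A (pfrac R M MH) < pminus A (S :&: A) (pfrac R M MH) 0 1 delta)).
    by rewrite /= !orbT.
  have [e3|e3] := boolP (pplus [set: X] S' (dp R (Mhat S) MH) (-1) 2 delta < pop_mean [set: X] (dp R (Mhat S) MH)).
    by rewrite /= !orbT.
  have [e4|e4] := boolP (pplus [set: X] S' (indic R (matched (Mhat S))) 0 1 delta < pop_mean [set: X] (indic R (matched (Mhat S)))).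
    by rewrite /= !orbT.
  apply/orP; left.
  apply: (@det R X Y M MH (Mhat S)) => //.
  - by apply: Hminus_ge; rewrite ler01.
  - by apply: Hminus_ge; rewrite ler01.
  - by rewrite leNgt.
  - by move=> hA; move: e2; rewrite hA /= leNgt.
  - by rewrite leNgt.
  - by rewrite leNgt.
cbv zeta; split.
- apply: (@bound_T R X s s' (fun S S' => pop_mean [set: X] (indic R A) < pminus [set: X] S' (indic R A) 0 1 delta) delta d0') => S _; apply: Hminus => //; exact: ind01.
- apply: (le_trans (@bound_pair R X s s'
     (fun S S' => (0 < #|A|)%N && (pop_mean A (pfrac R M MH) < pminus A (S :&: A) (pfrac R M MH) 0 1 delta))
     (fun S =>
     ((0 < #|A|)%N && (pop_mean A (pfrac R M MH) < pminus A (S :&: A) (pfrac R M MH) 0 1 delta))%:R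
      * #|[set S' : {set X} | #|S'| == s']|%:R) _)).
    move=> S _ /=.
    case: ((0 < #|A|)%N && _) => /=.
      rewrite mul1r le_eqVlt; apply/orP; left; apply/eqP; congr (_%:R).
      by apply: eq_card => S'; rewrite !inE andbT.
    rewrite mul0r (_ : [set S' : {set X} | (#|S'| == s') && false] = set0) ?cards0 //.
    by apply/setP => S'; rewrite !inE andbF.
  under eq_bigr do rewrite mulrC.
  rewrite -mulr_sumr sum_bool_dep den_eq.
  set D1 := #|[set S' : {set X} | #|S'| == s']|%:R.
  set Ds := #|[set S : {set X} | #|S| == s]|%:R.
  rewrite (_ : delta * (Ds * D1) = D1 * (delta * Ds)); last by ring.
  apply: ler_wpM2l; first exact: ler0n.
  case: (posnP #|A|) => [hA0|hA].
    rewrite (_ : [set S : {set X} | _] = set0) ?cards0 ?mulr_ge0 ?ler0n //.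
    by apply/setP => S; rewrite !inE /= andbF.
  rewrite (_ : [set S : {set X} | _] = [set S : {set X} | (#|S| == s) &&
      (fun T => pop_mean A (pfrac R M MH) < pminus A T (pfrac R M MH) 0 1 delta) (S :&: A)]); last first.
    by apply/setP => S; rewrite !inE ?hA.
  apply: (@mix R X A s (fun T => pop_mean A (pfrac R M MH) < pminus A T (pfrac R M MH) 0 1 delta) delta d0') => k.
  case: (leqP k #|A|) => hk.
    have := Hminus A k (pfrac R M MH) 0 1 delta hA hk d0 (fun x _ => introT andP (conj (@pfrac_ge0 R X Y M MH x) (@pfrac_le1 R X Y M MH x))).
    rewrite /samp_prob.
    rewrite (_ : [set S : {set X} | (S \subset A) && (#|S| == k)] = [set T : {set X} | [&& T \subset A, #|T| == k & true]]); last first.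
      by apply/setP => S; rewrite !inE andbT.
    apply: frac_le => //; apply: subset_leq_card; apply/subsetP => T; rewrite !inE.
    by case/and3P => -> -> _.
  rewrite (_ : [set T : {set X} | _] = set0) ?cards0 ?mulr_ge0 ?ler0n //.
  apply/setP => T; rewrite !inE; apply/negP => /and3P [hT /eqP hTk _].
  have := subset_leq_card hT; lia.
- apply: (@bound_T R X s s' (fun S S' => pplus [set: X] S' (dp R (Mhat S) MH) (-1) 2 delta < pop_mean [set: X] (dp R (Mhat S) MH)) delta d0') => S hS; apply: Hplus => // x _; exact: hdp.
- apply: (@bound_T R X s s' (fun S S' => pplus [set: X] S' (indic R (matched (Mhat S))) 0 1 delta < pop_mean [set: X] (indic R (matched (Mhat S)))) delta d0') => S hS; apply: Hplus => //; exact: ind01.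
Qed.
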